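(* Let $C=\bigwedge_{k=1}^m(c_{k,1}\vee c_{k,2}\vee c_{k,3})$ be a 3-SAT formula in $n$ Boolean variables $x_1,\dots,x_n$, where each literal $c_{k,j}$ equals $x_i$ or $\overline{x_i}$ for some $i$. On $m+n$ qubits labelled $\{1,\dots,n\}\cup\{d_1,\dots,d_m\}$ define \[H_C=\sum_{k=1}^m-(X_{d_k}+Z_{d_k}+I)\otimes\big(S(c_{k,1})+S(c_{k,2})+S(c_{k,3})+2I\big),\] where $S(c)=Z_i$ if $c=x_i$ and $S(c)=X_i$ if $c=\overline{x_i}$. For $x\in\{0,1\}^n$, $y\in\{0,1\}^m$ let ${\sf W}(x,y)=\big(\bigotimes_{i=1}^n W_i^{x_i}\big)\otimes\big(\bigotimes_{j=1}^m W_{d_j}^{y_j}\big)$, with $W$ the Hadamard gate. Then for every $x\in\{0,1\}^n$: $C(x)$ evaluates to true if and only if for all $y\in\{0,1\}^m$ the matrix ${\sf W}(x,y)H_C{\sf W}(x,y)^\dagger$ is a symmetric $Z$-matrix.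
   Context: A Hermitian matrix is a symmetric $Z$-matrix if it is real and all off-diagonal entries in the computational basis are non-positive. $X_\alpha,Z_\alpha$ denote Pauli matrices on qubit $\alpha$; $W=\frac1{\sqrt2}\begin{pmatrix}1&1\\1&-1\end{pmatrix}$, $W^0=I$, $W^1=W$. *)

(* Defs.v *)
(* Real scalars: all operators involved are real matrices. *)
From HB Require Import structures.
From mathcomp Require Import all_boot all_order all_algebra.
Set Implicit Arguments. Unset Strict Implicit. Unset Printing Implicit Defensive.
Import Order.TTheory GRing.Theory Num.Theory.
Local Open Scope ring_scope.

Section Defs.
Variable R : rcfType.

Definition pauliX : 'M[R]_2 := \matrix_(i, j) (if i != j then 1 else 0).
Definition pauliZ : 'M[R]_2 :=
  \matrix_(i, j) (if i == j then (if i == 0 then 1 else -1) else 0).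
Definition hadamard : 'M[R]_2 :=
  (Num.sqrt 2)^-1 *: \matrix_(i, j) (if (i == 1) && (j == 1) then -1 else 1).

Definition qbit N (i : 'I_(2 ^ N)) (q : 'I_N) : 'I_2 := inord (odd (i %/ 2 ^ q)).

Definition kron N (A : 'I_N -> 'M[R]_2) : 'M[R]_(2 ^ N) :=
  \matrix_(i, j) \prod_(q < N) A q (qbit i q) (qbit j q).

Definition on_qubit N (a : 'I_N) (P : 'M[R]_2) : 'M[R]_(2 ^ N) :=
  kron (fun q => if q == a then P else 1%:M).

Definition symZmatrix k (A : 'M[R]_k) : Prop :=
  A^T = A /\ forall i j : 'I_k, i != j -> A i j <= 0.

End Defs.

(* 3-SAT: a literal is (variable index, negated?) ; literal (i,false) = x_i,
   (i,true) = not x_i.  A formula has m clauses of 3 literals. *)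
Definition lit_val n (x : 'I_n -> bool) (c : 'I_n * bool) : bool :=
  if c.2 then ~~ x c.1 else x c.1.

Definition sat_eval n m (C : 'I_m -> 'I_3 -> 'I_n * bool) (x : 'I_n -> bool) : bool :=
  [forall k, [exists j, lit_val x (C k j)]].

(* qubits: variable i is qubit lshift m i, ancilla d_k is qubit rshift n k *)
Definition var_qubit n m (i : 'I_n) : 'I_(n + m) := lshift m i.
Definition anc_qubit n m (k : 'I_m) : 'I_(n + m) := rshift n k.

Definition S_op (R : rcfType) n m (c : 'I_n * bool) : 'M[R]_(2 ^ (n + m)) :=
  on_qubit (var_qubit m c.1) (if c.2 then pauliX R else pauliZ R).

Definition H_C (R : rcfType) n m (C : 'I_m -> 'I_3 -> 'I_n * bool) : 'M[R]_(2 ^ (n + m)) :=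
  \sum_(k < m)
    - ((on_qubit (anc_qubit n k) (pauliX R) + on_qubit (anc_qubit n k) (pauliZ R) + 1%:M)
       *m (S_op R m (C k 0) + S_op R m (C k 1) + S_op R m (C k 2%:R) + 2%:R%:M)).

Definition Wxy (R : rcfType) n m (x : 'I_n -> bool) (y : 'I_m -> bool)
  : 'M[R]_(2 ^ (n + m)) :=
  kron (fun q : 'I_(n + m) =>
    if (match split q with inl i => x i | inr k => y k end)
    then hadamard R else 1%:M).

(* Main.v *)
Require Import Defs.
From mathcomp Require Import all_boot all_order all_algebra.
From mathcomp Require Import lra.
Import GRing.Theory Num.Theory.
Set Implicit Arguments. Unset Strict Implicit. Unset Printing Implicit Defensive.

Lemma bits_nat_inj N : forall i j : nat, (i < 2 ^ N)%N -> (j < 2 ^ N)%N ->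
  (forall q, (q < N)%N -> odd (i %/ 2 ^ q) = odd (j %/ 2 ^ q)) -> i = j.
Proof.
elim: N => [|N IH] i j.
  by rewrite expn0 !ltnS !leqn0 => /eqP-> /eqP->.
move=> hi hj h.
have h0 := h 0%N isT; rewrite expn0 !divn1 in h0.
have e : i %/ 2 = j %/ 2.
  apply: IH.
  - by rewrite ltn_divLR // -expnSr.
  - by rewrite ltn_divLR // -expnSr.
  move=> q hq; have := h q.+1 hq; by rewrite expnS !divnMA.
by rewrite -(odd_double_half i) -(odd_double_half j) -!divn2 e h0.
Qed.

Local Open Scope ring_scope.
Section K.
Variable R : rcfType.

Definition bits N (i : 'I_(2 ^ N)) : {ffun 'I_N -> 'I_2} := [ffun q => qbit i q].

Lemma bits_inj N : injective (@bits N).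
Proof.
move=> i j /ffunP h; apply: val_inj; apply: (@bits_nat_inj N); rewrite ?ltn_ord //.
move=> q hq; have := h (Ordinal hq); rewrite !ffunE /qbit => /(congr1 val) /=.
by rewrite !inordK ?ltnS ?leq_b1 // ; by case: (odd (i %/ _)); case: (odd (j %/ _)).
Qed.

Lemma bits_bij N : bijective (@bits N).
Proof.
apply: inj_card_bij; first exact: bits_inj.
by rewrite card_ffun !card_ord.
Qed.

Lemma kronE N (A : 'I_N -> 'M[R]_2) i j :
  kron A i j = \prod_q A q (bits i q) (bits j q).
Proof. by rewrite mxE; apply: eq_bigr => q _; rewrite !ffunE. Qed.

Lemma eq_kron N (A B : 'I_N -> 'M[R]_2) : (forall q, A q = B q) -> kron A = kron B.
Proof. by move=> h; apply/matrixP => i j; rewrite !mxE; apply: eq_bigr => q _; rewrite h. Qed.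

Lemma kron_mul N (A B : 'I_N -> 'M[R]_2) :
  kron A *m kron B = kron (fun q => A q *m B q).
Proof.
apply/matrixP => i k; rewrite mxE kronE.
transitivity (\sum_(j < 2 ^ N) \prod_q (A q (bits i q) (bits j q) * B q (bits j q) (bits k q))).
  by apply: eq_bigr => j _; rewrite !kronE -big_split.
under [RHS]eq_bigr => q _ do rewrite mxE.
rewrite bigA_distr_bigA (reindex (@bits N)) /=; last first.
  by case: (bits_bij N) => g h1 h2; exists g => y _; [apply: h1| apply: h2].
by [].
Qed.

Lemma kron1 N : kron (fun _ : 'I_N => 1%:M) = 1%:M :> 'M[R]_(2 ^ N).
Proof.
apply/matrixP => i j; rewrite kronE [RHS]mxE.
have [<-|hij] := eqVneq i j.
  by rewrite big1 // => q _; rewrite mxE eqxx.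
have [q hq] : exists q, bits i q != bits j q.
  apply/existsP; rewrite -negb_forall; apply: contra hij => /forallP h.
  by apply/eqP/bits_inj/ffunP => q; apply/eqP/h.
by rewrite (bigD1 q) //= mxE (negbTE hq) mul0r.
Qed.

Lemma kron_tr N (A : 'I_N -> 'M[R]_2) : (kron A)^T = kron (fun q => (A q)^T).
Proof. by apply/matrixP => i j; rewrite !mxE; apply: eq_bigr => q _; rewrite mxE. Qed.

Lemma on_qubitD N (a : 'I_N) (P Q : 'M[R]_2) :
  on_qubit a P + on_qubit a Q = on_qubit a (P + Q).
Proof.
apply/matrixP => i j; rewrite !mxE (bigD1 a) // [X in _ + X](bigD1 a) //.
rewrite [in RHS](bigD1 a) //= !eqxx mxE mulrDl; congr (_ * _ + _ * _);
  by apply: eq_bigr => q /negbTE ->.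
Qed.

Lemma on_qubit1 N (a : 'I_N) : on_qubit a 1%:M = 1%:M :> 'M[R]_(2 ^ N).
Proof. by rewrite /on_qubit -(kron1 N); apply: eq_kron => q; case: ifP. Qed.

Lemma bits_surj N (f : {ffun 'I_N -> 'I_2}) : exists i, bits i = f.
Proof. case: (bits_bij N) => g h1 h2; exists (g f); exact: h2. Qed.

Definition nnegmx k (A : 'M[R]_k) := forall i j, 0 <= A i j.

Lemma nnegmxD k (A B : 'M[R]_k) : nnegmx A -> nnegmx B -> nnegmx (A + B).
Proof. by move=> hA hB i j; rewrite mxE addr_ge0. Qed.

Lemma nnegmxM k (A B : 'M[R]_k) : nnegmx A -> nnegmx B -> nnegmx (A *m B).
Proof. by move=> hA hB i j; rewrite mxE sumr_ge0 // => l _; rewrite mulr_ge0. Qed.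

Lemma nnegmx1 k : nnegmx (1%:M : 'M[R]_k).
Proof. by move=> i j; rewrite mxE ler0n. Qed.

Lemma nnegmx_kron N (A : 'I_N -> 'M[R]_2) : (forall q, nnegmx (A q)) -> nnegmx (kron A).
Proof. by move=> h i j; rewrite mxE; apply: prodr_ge0 => q _; apply: h. Qed.

Lemma nnegmx_on N (a : 'I_N) P : nnegmx P -> nnegmx (on_qubit a P).
Proof. by move=> h; apply: nnegmx_kron => q; case: ifP => // _; apply: nnegmx1. Qed.

End K.

Section H.
Variable R : rcfType.

Lemma ord2 (i : 'I_2) : i = 0 \/ i = 1.
Proof. case: i => [[|[|k]] hk]; [left|right|by []]; exact: val_inj. Qed.

Definition Hm : 'M[R]_2 := \matrix_(i, j) (if (i == 1) && (j == 1) then -1 else 1).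
Definition sh : R := (Num.sqrt 2)^-1.

Lemma sh2 : sh * sh = 2^-1.
Proof. by rewrite /sh -invfM -expr2 sqr_sqrtr // ler0n. Qed.

Lemma had_conj (P : 'M[R]_2) : hadamard R *m P *m hadamard R = (sh * sh) *: (Hm *m P *m Hm).
Proof. by rewrite /hadamard -!scalemxAl -!scalemxAr scalerA. Qed.

Lemma had_tr : (hadamard R)^T = hadamard R.
Proof.
rewrite /hadamard linearZ /=; congr (_ *: _).
apply/matrixP => i j; rewrite !mxE; by rewrite andbC.
Qed.

Lemma had_HXH : hadamard R *m pauliX R *m hadamard R = pauliZ R.
Proof.
rewrite had_conj sh2; apply/matrixP => i j; rewrite !mxE !big_ord_recl !big_ord0 !mxE !big_ord_recl !big_ord0 !mxE.
by case: (ord2 i) => ->; case: (ord2 j) => -> /=; lra.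
Qed.

Lemma had_HZH : hadamard R *m pauliZ R *m hadamard R = pauliX R.
Proof.
rewrite had_conj sh2; apply/matrixP => i j; rewrite !mxE !big_ord_recl !big_ord0 !mxE !big_ord_recl !big_ord0 !mxE.
by case: (ord2 i) => ->; case: (ord2 j) => -> /=; lra.
Qed.

Lemma had_HH : hadamard R *m hadamard R = 1%:M.
Proof.
rewrite -[X in X *m _ = _]mulmx1 had_conj sh2; apply/matrixP => i j; rewrite !mxE !big_ord_recl !big_ord0 !mxE !big_ord_recl !big_ord0 !mxE.
by case: (ord2 i) => ->; case: (ord2 j) => -> /=; lra.
Qed.
End H.

Section C.
Variable R : rcfType.
Variable N : nat.
Variable Wf : 'I_N -> 'M[R]_2.
Hypothesis hWl : forall q, Wf q *m (Wf q)^T = 1%:M.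
Hypothesis hWr : forall q, (Wf q)^T *m Wf q = 1%:M.

Definition cj (M : 'M[R]_(2 ^ N)) := kron Wf *m M *m (kron Wf)^T.

Lemma WWt : kron Wf *m (kron Wf)^T = 1%:M.
Proof. by rewrite kron_tr kron_mul -(kron1 R N); apply: eq_kron. Qed.
Lemma WtW : (kron Wf)^T *m kron Wf = 1%:M.
Proof. by rewrite kron_tr kron_mul -(kron1 R N); apply: eq_kron. Qed.

Lemma cjM A B : cj (A *m B) = cj A *m cj B.
Proof.
by rewrite /cj -!mulmxA (mulmxA (kron Wf)^T) WtW mul1mx.
Qed.

Lemma cjD A B : cj (A + B) = cj A + cj B.
Proof. by rewrite /cj mulmxDr mulmxDl. Qed.

Lemma cjN A : cj (- A) = - cj A.
Proof. by rewrite /cj mulmxN mulNmx. Qed.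

Lemma cj_sum I (r : seq I) (P : pred I) (F : I -> 'M[R]_(2 ^ N)) :
  cj (\sum_(i <- r | P i) F i) = \sum_(i <- r | P i) cj (F i).
Proof. by rewrite /cj mulmx_sumr mulmx_suml. Qed.

Lemma cj_scalar c : cj c%:M = c%:M.
Proof. by rewrite /cj mul_mx_scalar -scalemxAl WWt scalemx1. Qed.

Lemma cj_on a P : cj (on_qubit a P) = on_qubit a (Wf a *m P *m (Wf a)^T).
Proof.
rewrite /cj /on_qubit kron_tr !kron_mul; apply: eq_kron => q.
by case: ifP => [/eqP -> // | _]; rewrite mulmx1 hWl.
Qed.
End C.

Section M.
Variable R : rcfType.
Variables n m : nat.
Variable C : 'I_m -> 'I_3 -> 'I_n * bool.
Variable x : 'I_n -> bool.

Definition XZ1 : 'M[R]_2 := pauliX R + pauliZ R + 1%:M.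

Definition Lt k j : 'M[R]_(2 ^ (n + m)) :=
  on_qubit (var_qubit m (C k j).1) (if lit_val x (C k j) then pauliX R else pauliZ R).
Definition Ak k : 'M[R]_(2 ^ (n + m)) := on_qubit (anc_qubit n k) XZ1.
Definition Bk k : 'M[R]_(2 ^ (n + m)) := Lt k 0 + Lt k 1 + Lt k 2%:R + 2%:R%:M.

Definition Wf (y : 'I_m -> bool) (q : 'I_(n + m)) : 'M[R]_2 :=
  if (match split q with inl i => x i | inr k => y k end) then hadamard R else 1%:M.

Lemma Wf_l y q : Wf y q *m (Wf y q)^T = 1%:M.
Proof. by rewrite /Wf; case: ifP => _; rewrite ?had_tr ?had_HH // trmx1 mulmx1. Qed.
Lemma Wf_r y q : (Wf y q)^T *m Wf y q = 1%:M.
Proof. by rewrite /Wf; case: ifP => _; rewrite ?had_tr ?had_HH // trmx1 mulmx1. Qed.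

Lemma split_r (k : 'I_m) : split (rshift n k) = inr k.
Proof. exact: (unsplitK (inr k)). Qed.
Lemma split_l (i : 'I_n) : split (lshift m i) = inl i.
Proof. exact: (unsplitK (inl i)). Qed.

Lemma conj_HC y : Wxy R x y *m H_C R C *m (Wxy R x y)^T = \sum_k - (Ak k *m Bk k).
Proof.
change (cj (Wf y) (H_C R C) = \sum_k - (Ak k *m Bk k)).
rewrite /H_C cj_sum; apply: eq_bigr => k _.
rewrite cjN (cjM (Wf_r y)); congr (- (_ *m _)).
  rewrite !cjD (cj_scalar (Wf_l y)) !(cj_on (Wf_l y)) /Ak /XZ1 /Wf /anc_qubit split_r.
  case: (y k); rewrite ?had_tr ?had_HXH ?had_HZH ?mul1mx ?trmx1 ?mulmx1.
    by rewrite -(on_qubit1 R (rshift n k)) !on_qubitD (addrC (pauliZ R)).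
  by rewrite -(on_qubit1 R (rshift n k)) !on_qubitD.
rewrite !cjD (cj_scalar (Wf_l y)) !(cj_on (Wf_l y)) /Lt /Wf /var_qubit !split_l.
congr (_ + _ + _ + _); congr on_qubit; rewrite /lit_val;
  case: (C k _) => [i b] /=; case: b; case: (x i);
  by rewrite ?had_tr ?had_HXH ?had_HZH ?mul1mx ?trmx1 ?mulmx1.
Qed.

Lemma on_tr N (a : 'I_N) (P : 'M[R]_2) : (on_qubit a P)^T = on_qubit a P^T.
Proof. by rewrite /on_qubit kron_tr; apply: eq_kron => q; case: ifP; rewrite ?trmx1. Qed.

Lemma X_tr : (pauliX R)^T = pauliX R.
Proof. by apply/matrixP => i j; rewrite !mxE eq_sym. Qed.
Lemma Z_tr : (pauliZ R)^T = pauliZ R.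
Proof. by apply/matrixP => i j; rewrite !mxE eq_sym; case: eqP => // ->. Qed.

Lemma onon N (a b : 'I_N) (P Q : 'M[R]_2) : a != b ->
  on_qubit a P *m on_qubit b Q = kron (fun q => if q == a then P else if q == b then Q else 1%:M).
Proof.
move=> hab; rewrite /on_qubit kron_mul; apply: eq_kron => q.
case: (eqVneq q a) => [->|_]; first by rewrite (negbTE hab); apply: mulmx1.
by case: ifP; rewrite mul1mx.
Qed.

Lemma on_comm N (a b : 'I_N) (P Q : 'M[R]_2) : a != b ->
  on_qubit a P *m on_qubit b Q = on_qubit b Q *m on_qubit a P.
Proof.
move=> hab; rewrite /on_qubit !kron_mul; apply: eq_kron => q.
case: (eqVneq q a) => [->|_]; first by rewrite (negbTE hab) mulmx1 mul1mx.
by case: ifP; rewrite ?mul1mx ?mulmx1.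
Qed.

Lemma AB_comm k : Ak k *m Bk k = Bk k *m Ak k.
Proof.
rewrite /Bk !mulmxDr !mulmxDl scalar_mxC /Ak /Lt.
by rewrite !(@on_comm _ (anc_qubit n k)) // /anc_qubit /var_qubit eq_rlshift.
Qed.

Lemma Lt_tr k j : (Lt k j)^T = Lt k j.
Proof. by rewrite /Lt on_tr; case: ifP; rewrite ?X_tr ?Z_tr. Qed.

Lemma M_sym : (\sum_k - (Ak k *m Bk k))^T = \sum_k - (Ak k *m Bk k).
Proof.
rewrite linear_sum; apply: eq_bigr => k _ /=.
rewrite linearN /= trmx_mul AB_comm /Bk /Ak !linearD /= !Lt_tr tr_scalar_mx on_tr.
by rewrite /XZ1 !linearD /= X_tr Z_tr trmx1.
Qed.

Lemma addmx_entry k (A B : 'M[R]_k) i j : (A + B) i j = A i j + B i j.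
Proof. by rewrite mxE. Qed.

Lemma scale_entry k (c : R) (A : 'M[R]_k) i j : (c *: A) i j = c * A i j.
Proof. by rewrite mxE. Qed.

Lemma nneg_XZ1 : nnegmx XZ1.
Proof. by move=> i j; rewrite !mxE; case: (ord2 i) => ->; case: (ord2 j) => -> /=; lra. Qed.
Lemma nneg_X : nnegmx (pauliX R).
Proof. by move=> i j; rewrite !mxE; case: (ord2 i) => ->; case: (ord2 j) => -> /=; lra. Qed.
Lemma nneg_X1 : nnegmx (pauliX R + 1%:M).
Proof. by move=> i j; rewrite !mxE; case: (ord2 i) => ->; case: (ord2 j) => -> /=; lra. Qed.
Lemma nneg_Z1 : nnegmx (pauliZ R + 1%:M).
Proof. by move=> i j; rewrite !mxE; case: (ord2 i) => ->; case: (ord2 j) => -> /=; lra. Qed.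
Lemma XZ1_01 : XZ1 0 1 = 1.
Proof. rewrite !mxE /=; lra. Qed.
Lemma Z_11 : pauliZ R 1 1 = -1.
Proof. by rewrite !mxE /=. Qed.
Lemma one_11 : (1%:M : 'M[R]_2) 1 1 = 1.
Proof. by rewrite !mxE /=. Qed.

Lemma Lt_plus1 k j : nnegmx (Lt k j + 1%:M).
Proof.
rewrite /Lt -(on_qubit1 R (var_qubit m (C k j).1)) on_qubitD; apply: nnegmx_on.
by case: ifP => _; [apply: nneg_X1 | apply: nneg_Z1].
Qed.

Lemma ord3 (j : 'I_3) : j = 0 \/ j = 1 \/ j = 2%:R.
Proof. case: j => [[|[|[|k]]] hk]; [left|right;left|right;right|by []]; exact: val_inj. Qed.

Lemma Bk_nneg k : [exists j, lit_val x (C k j)] -> nnegmx (Bk k).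
Proof.
move/existsP=> [j0 hj0] i j.
have h0 : 0 <= Lt k j0 i j by rewrite /Lt hj0; exact: (nnegmx_on _ nneg_X i j).
have hl := fun jj => Lt_plus1 k jj i j.
have h1 := hl 0; have h2 := hl 1; have h3 := hl 2%:R.
rewrite addmx_entry in h1; rewrite addmx_entry in h2; rewrite addmx_entry in h3.
have e2 : (2%:R%:M : 'M[R]_(2 ^ (n + m))) i j = 1%:M i j + 1%:M i j.
  by rewrite !mxE; case: (i == j) => /=; rewrite ?mulr1n ?mulr0n ?addr0.
rewrite /Bk !addmx_entry e2.
by case: (ord3 j0) h0 => [->|[->|->]] h0; lra.
Qed.

Lemma kron_zero N (F : 'I_N -> 'M[R]_2) c i j :
  F c = 1%:M -> bits i c != bits j c -> kron F i j = 0.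
Proof. by move=> hF h; rewrite kronE (bigD1 c) //= hF mxE (negbTE h) mul0r. Qed.

Lemma AB_other k k' (i j : 'I_(2 ^ (n + m))) : k' != k ->
  bits i (anc_qubit n k) != bits j (anc_qubit n k) -> (Ak k' *m Bk k') i j = 0.
Proof.
move=> hk h; rewrite /Bk !mulmxDr mul_mx_scalar !addmx_entry.
have hA : Ak k' i j = 0.
  by apply: (kron_zero _ h); rewrite /anc_qubit eq_rshift eq_sym (negbTE hk).
have hL jj : (Ak k' *m Lt k' jj) i j = 0.
  rewrite /Ak /Lt onon; last by rewrite /anc_qubit /var_qubit eq_rlshift.
  apply: (kron_zero _ h).
  by rewrite /anc_qubit /var_qubit eq_rshift eq_sym (negbTE hk) eq_rlshift.
by rewrite !hL scale_entry hA mulr0 !addr0.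
Qed.

Lemma AB_self k (i j : 'I_(2 ^ (n + m))) :
  (forall jj, lit_val x (C k jj) = false) ->
  bits i = [ffun q => if q == anc_qubit n k then 0 else 1] ->
  bits j = [ffun q => 1] ->
  (Ak k *m Bk k) i j = -1.
Proof.
move=> hf hi hj; rewrite /Bk !mulmxDr mul_mx_scalar !addmx_entry.
set d := anc_qubit n k.
have hA : Ak k i j = 1.
  rewrite /Ak kronE hi hj (bigD1 d) //= big1 => [|q hq]; rewrite !ffunE ?eqxx.
    by rewrite XZ1_01 mulr1.
  by rewrite (negbTE hq) one_11.
have hL jj : (Ak k *m Lt k jj) i j = -1.
  set v := var_qubit m (C k jj).1.
  have hvd : v != d by rewrite /v /d /anc_qubit /var_qubit eq_lrshift.
  rewrite /Ak /Lt hf onon; last by rewrite eq_sym.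
  rewrite kronE hi hj (bigD1 d) //= (bigD1 v) //= big1 => [|q /andP [hq1 hq2]].
    by rewrite !ffunE !eqxx (negbTE hvd) XZ1_01 Z_11 mulr1 mul1r.
  by rewrite !ffunE (negbTE hq1) (negbTE hq2) one_11.
rewrite !hL scale_entry hA; lra.
Qed.
End M.

Unset Implicit Arguments.
Theorem lemma5p4 (R : rcfType) (n m : nat) (C : 'I_m -> 'I_3 -> 'I_n * bool)
  (x : 'I_n -> bool) :
  sat_eval C x <->
  (forall y : 'I_m -> bool,
     symZmatrix (Wxy R x y *m H_C R C *m (Wxy R x y)^T)).
Proof.
split.
  move=> hs y; rewrite (conj_HC R C x y); split; first exact: M_sym.
  move=> i j _; rewrite summxE; apply: sumr_le0 => k _.
  rewrite mxE oppr_le0; apply: nnegmxM; first exact: (nnegmx_on _ (nneg_XZ1 R)).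
  by apply: Bk_nneg; move/forallP: hs; apply.
move=> H; apply/forallP => k; apply: contraT => hk.
have hf : forall jj, lit_val x (C k jj) = false.
  by move=> jj; apply: negbTE; move: hk; rewrite negb_exists => /forallP; apply.
set d := anc_qubit n k.
have [i hi] := bits_surj [ffun q : 'I_(n + m) => if q == d then 0 else 1 : 'I_2].
have [j hj] := bits_surj [ffun q : 'I_(n + m) => 1 : 'I_2].
have hd : bits i d != bits j d by rewrite hi hj !ffunE eqxx.
have hij : i != j by apply: contraNneq hd => ->.
case: (H (fun _ => false)) => _ /(_ i j hij).
rewrite (conj_HC R C x) summxE (bigD1 k) //= big1 => [|k' hk']; last first.
  by rewrite mxE (@AB_other R n m C x k k' i j hk' hd) oppr0.
rewrite mxE (@AB_self R n m C x k i j hf hi hj) addr0 opprK; lra.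
Qed.
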